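(* Let $n\geq 7$ and $p\geq 2$. Then $\rho(\mathbf{S}_{p}(U_{5}))<\rho(\mathbf{S}_{p}(U_{4}))$.
   Context: All graphs are simple and connected; $d_i$ is the degree of $v_i$. The $p$-Sombor matrix $\mathbf{S}_{p}(G)$ has $(i,j)$-entry $(d_i^{p}+d_j^{p})^{1/p}$ if $v_iv_j\in E(G)$ and $0$ otherwise; $\rho(\mathbf{S}_{p}(G))$ is its largest eigenvalue. $U_4$ is the unicyclic graph of order $n$ consisting of a triangle $xyz$, with $n-5$ pendant vertices attached to $x$ and $2$ pendant vertices attached to $y$. $U_5$ is the unicyclic graph of order $n$ consisting of a triangle $xyz$, a vertex $w$ adjacent to $x$, and $n-4$ pendant vertices attached to $w$. *)

(* Defs.v *)
From HB Require Import structures.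
From mathcomp Require Import all_boot all_order all_algebra.
From mathcomp Require Import all_classical all_reals all_analysis.
Set Implicit Arguments. Unset Strict Implicit. Unset Printing Implicit Defensive.
Import Order.TTheory GRing.Theory Num.Theory.
Local Open Scope ring_scope.

(* Simple graphs on vertex set 'I_n given by a symmetric irreflexive rel. *)
Definition degree (n : nat) (e : rel 'I_n) (i : 'I_n) : nat := #|[set j | e i j]|.

Definition psombor_mx (R : realType) (n : nat) (p : R) (e : rel 'I_n) : 'M[R]_n :=
  \matrix_(i, j) (if e i j then
      (((degree e i)%:R `^ p + (degree e j)%:R `^ p) `^ p^-1)%R else 0).

Definition is_largest_eigenvalue (R : realType) (n : nat) (A : 'M[R]_n) (r : R) : Prop :=
  eigenvalue A r /\ forall a, eigenvalue A a -> a <= r.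

(* U_4: triangle x=0,y=1,z=2; pendants 3..n-3 (n-5 of them) at x;
   pendants n-2, n-1 at y. *)
Definition U4_nat (n a b : nat) : bool :=
  [|| (a == 0%N) && (b == 1%N), (a == 0%N) && (b == 2%N), (a == 1%N) && (b == 2%N),
      (a == 0%N) && (3 <= b <= n - 3)%N
    | (a == 1%N) && (n - 2 <= b)%N ].
Definition U4 (n : nat) : rel 'I_n :=
  fun i j => U4_nat n i j || U4_nat n j i.

(* U_5: triangle x=0,y=1,z=2; w=3 adjacent to x; pendants 4..n-1 (n-4) at w. *)
Definition U5_nat (a b : nat) : bool :=
  [|| (a == 0%N) && (b == 1%N), (a == 0%N) && (b == 2%N), (a == 1%N) && (b == 2%N),
      (a == 0%N) && (b == 3%N)
    | (a == 3%N) && (4 <= b)%N ].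
Definition U5 (n : nat) : rel 'I_n :=
  fun i j => U5_nat i j || U5_nat j i.

(* Main.v *)
Require Import Defs.
From HB Require Import structures.
From mathcomp Require Import all_boot all_order all_algebra.
From mathcomp Require Import all_classical all_reals all_analysis.
From mathcomp Require Import zify ring lra.
Import Order.TTheory GRing.Theory Num.Theory.
Local Open Scope ring_scope.
Set Implicit Arguments. Unset Strict Implicit. Unset Printing Implicit Defensive.

Section T. Variable R : realType.

Lemma ivt_root (P : {poly R}) a b : a <= b -> P.[a] <= 0 -> 0 <= P.[b] ->
  exists2 r, a <= r <= b & P.[r] = 0.
Proof.
move=> ab pa pb.
have hin : 0 \in `[P.[a], P.[b]] by rewrite in_itv /= pa pb.
have [r hr /rootP hr0] := @poly_ivt R P a b ab hin.
by exists r.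
Qed.

Lemma U5_root (f g h d N : R) : 0 < f -> 0 < g -> 0 < h -> 0 < d -> 0 <= N -> g < h ->
  exists r X1 X3 X4 : R,
   [/\ N * d ^+ 2 + h ^+ 2 <= r ^+ 2, 0 < r, 0 < X1, 0 < X3 & 0 < X4] /\
   [/\ 2 * f * X1 + h * X3 = r, f + g * X1 = r * X1,
       h + N * d * X4 = r * X3 & d * X3 = r * X4].
Proof.
move=> f0 g0 h0 d0 N0 gh.
set S := N * d ^+ 2 + h ^+ 2.
set Q := 4 * f ^+ 2 + 4 * g ^+ 2.
have S0 : 0 <= S by rewrite /S; nra.
have SQ0 : 0 <= S + Q by rewrite /S /Q; nra.
set L := Num.sqrt S. set H := Num.sqrt (S + Q).
have L2 : L ^+ 2 = S by rewrite sqr_sqrtr.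
have H2 : H ^+ 2 = S + Q by rewrite sqr_sqrtr.
have L0 : 0 <= L by rewrite sqrtr_ge0.
have H0 : 0 <= H by rewrite sqrtr_ge0.
have LH : L <= H by rewrite ler_sqrt // /Q; nra.
set P : {poly R} := 'X * ('X - g%:P) * ('X ^+ 2 - S%:P) - (2 * f ^+ 2) *: ('X ^+ 2 - (N * d ^+ 2)%:P).
have PE x : P.[x] = x * (x - g) * (x ^+ 2 - S) - 2 * f ^+ 2 * (x ^+ 2 - N * d ^+ 2).
  by rewrite /P !hornerE.
have [r /andP [Lr rH] Pr] : exists2 r, L <= r <= H & P.[r] = 0.
  apply: ivt_root => //.
    have fh : 0 <= f ^+ 2 * h ^+ 2 by rewrite mulr_ge0 // sqr_ge0.
    rewrite PE L2 subrr mulr0 add0r /S; nra.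
  rewrite PE H2.
  have Hg : 2 * g <= H.
    have : (2 * g) ^+ 2 <= H ^+ 2 by rewrite H2 /S /Q; nra.
    by rewrite ler_sqr ?nnegrE // mulr_ge0 // ltW.
  have e1 : (S + Q) / 2 <= H * (H - g).
    have : 0 <= H * (H / 2 - g) by rewrite mulr_ge0 //; lra.
    rewrite -H2; nra.
  have Q0 : 0 <= Q by rewrite /Q; nra.
  have e2 : (S + Q) / 2 * Q <= H * (H - g) * Q by rewrite ler_wpM2r.
  have e3 : 4 * f ^+ 2 <= Q by rewrite /Q; nra.
  have e4 : h ^+ 2 + Q <= S + Q by rewrite /S; nra.
  have e5 : 0 <= h ^+ 2 + Q by nra.
  have e6 : (h ^+ 2 + Q) * (4 * f ^+ 2) <= (S + Q) * Q.
    apply: ler_pM => //; nra.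
  have -> : S + Q - S = Q by ring.
  have -> : S + Q - N * d ^+ 2 = h ^+ 2 + Q by rewrite /S; ring.
  nra.
have r2 : S <= r ^+ 2 by rewrite -L2; nra.
have hr : h <= r by rewrite /S in r2; nra.
have r0 : 0 < r by lra.
have rg : 0 < r - g by lra.
set D := r ^+ 2 - N * d ^+ 2.
have D0 : 0 < D by rewrite /D; rewrite /S in r2; nra.
exists r, (f / (r - g)), (h * r / D), (d * (h * r / D) / r).
split; first split => //.
- by rewrite divr_gt0.
- by rewrite divr_gt0 // mulr_gt0.
- apply: divr_gt0 => //; apply: mulr_gt0 => //; apply: divr_gt0 => //; exact: mulr_gt0.
have rgn : r - g != 0 by rewrite gt_eqF.
have Dn : D != 0 by rewrite gt_eqF.
have rn : r != 0 by rewrite gt_eqF.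
split.
- have e : r * (r - g) * (D - h ^+ 2) = 2 * f ^+ 2 * D.
    move: Pr; rewrite PE /D /S => /eqP; rewrite subr_eq0 => /eqP <-; ring.
  apply/eqP; rewrite -subr_eq0; apply/eqP.
  have -> : 2 * f * (f / (r - g)) + h * (h * r / D) - r =
     (2 * f ^+ 2 * D + h ^+ 2 * r * (r - g) - r * (r - g) * D) / ((r - g) * D).
    by field; apply/andP.
  have -> : 2 * f ^+ 2 * D + h ^+ 2 * r * (r - g) - r * (r - g) * D = 0.
    by rewrite -e; ring.
  by rewrite mul0r.
- field; exact: rgn.
- rewrite /D in Dn *. field. by apply/andP.
- by field; rewrite ?rn ?Dn ?rgn.
Qed.

Lemma U4_root (a b c d e M : R) : 0 < a -> 0 < b -> 0 < c -> 0 < d -> 0 < e -> 0 <= M ->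
  exists r X1 X2 Yv Zv : R,
   [/\ 0 < r, 0 < X1, 0 < X2, 0 < Yv & 0 < Zv] /\
   [/\ a * X1 + b * X2 + M * d * Yv = r, a + c * X2 + 2 * e * Zv = r * X1,
       b + c * X1 = r * X2, d = r * Yv & e * X1 = r * Zv].
Proof.
move=> a0 b0 c0 d0 e0 M0.
set K := c ^+ 2 + 2 * e ^+ 2.
set B := b ^+ 2 + M * d ^+ 2.
set Q := 2 * a ^+ 2 + 2 * b * c.
have K0 : 0 < K by rewrite /K; nra.
have B0 : 0 < B by rewrite /B; nra.
have Q0 : 0 < Q by rewrite /Q; nra.
set Mx := if K <= B then B else K.
have MK : K <= Mx by rewrite /Mx; case: ifP => //; lra.
have MB : B <= Mx by rewrite /Mx; case: ifP => //; move/negbT; rewrite -ltNge; lra.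
have MKB : (Mx - K) * (Mx - B) = 0 by rewrite /Mx; case: ifP => _; ring.
have Mx0 : 0 <= Mx by lra.
have MxKB : Mx <= K + B by rewrite /Mx; case: ifP => _; lra.
have KBQ0 : 0 <= K + B + Q by lra.
set L := Num.sqrt Mx. set H := Num.sqrt (K + B + Q).
have L2 : L ^+ 2 = Mx by rewrite sqr_sqrtr.
have H2 : H ^+ 2 = K + B + Q by rewrite sqr_sqrtr.
have L0 : 0 <= L by rewrite sqrtr_ge0.
have H0 : 0 <= H by rewrite sqrtr_ge0.
have LH : L <= H by rewrite ler_sqrt //; lra.
set P : {poly R} := ('X ^+ 2 - K%:P) * ('X ^+ 2 - B%:P) - (a *: 'X + (b * c)%:P) ^+ 2.
have PE x : P.[x] = (x ^+ 2 - K) * (x ^+ 2 - B) - (a * x + b * c) ^+ 2.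
  by rewrite /P !hornerE.
have [r /andP [Lr rH] Pr] : exists2 r, L <= r <= H & P.[r] = 0.
  apply: ivt_root => //.
    rewrite PE L2 MKB sub0r oppr_le0; exact: sqr_ge0.
  rewrite PE H2.
  have h1 : (a * H + b * c) ^+ 2 <= 2 * a ^+ 2 * H ^+ 2 + 2 * (b * c) ^+ 2.
    have := sqr_ge0 (a * H - b * c); nra.
  rewrite H2 in h1.
  have h2 : 2 * a ^+ 2 * (B + K) <= Q * (B + K) by rewrite ler_wpM2r /Q; nra.
  have h3 : 2 * a ^+ 2 * Q + 2 * (b * c) ^+ 2 <= Q * Q.
    have bc0 : 0 < b * c by rewrite mulr_gt0.
    rewrite /Q; nra.
  have -> : K + B + Q - K = B + Q by ring.
  have -> : K + B + Q - B = K + Q by ring.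
  nra.
have r2 : Mx <= r ^+ 2 by rewrite -L2; nra.
have r0' : 0 <= r by lra.
have pos : 0 < (a * r + b * c) ^+ 2.
  have bc0 : 0 < b * c by rewrite mulr_gt0.
  have ar0 : 0 <= a * r by rewrite mulr_ge0 // ltW.
  by rewrite exprn_gt0 //; lra.
have eqr : (r ^+ 2 - K) * (r ^+ 2 - B) = (a * r + b * c) ^+ 2.
  by move: Pr; rewrite PE => /eqP; rewrite subr_eq0 => /eqP.
have rK : 0 < r ^+ 2 - K.
  rewrite lt_neqAle; apply/andP; split; last by lra.
  apply/eqP => h0; move: eqr pos; rewrite -h0 mul0r => <-; by rewrite ltxx.
have rB : 0 < r ^+ 2 - B.
  rewrite lt_neqAle; apply/andP; split; last by lra.
  apply/eqP => h0; move: eqr pos; rewrite -h0 mulr0 => <-; by rewrite ltxx.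
have r0 : 0 < r.
  rewrite lt_neqAle r0' andbT; apply/eqP => h0; move: rK; rewrite -h0; lra.
have rn : r != 0 by rewrite gt_eqF.
have rKn : r ^+ 2 - K != 0 by rewrite gt_eqF.
set t := (a * r + b * c) / (r ^+ 2 - K).
have t0 : 0 < t by rewrite /t divr_gt0 //; nra.
exists r, t, ((b + c * t) / r), (d / r), (e * t / r).
split; first split => //.
- by rewrite divr_gt0 //; nra.
- by rewrite divr_gt0.
- by rewrite divr_gt0 // mulr_gt0.
have rKn' : r ^+ 2 - (c ^+ 2 + 2 * e ^+ 2) != 0 by [].
split.
- apply/eqP; rewrite -subr_eq0; apply/eqP.
  have -> : a * t + b * ((b + c * t) / r) + M * d * (d / r) - r =
    ((a * r + b * c) ^+ 2 - (r ^+ 2 - K) * (r ^+ 2 - B)) / (r * (r ^+ 2 - K)).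
    rewrite /t /B /K in rKn' *; field; rewrite ?rn ?rKn' //; by apply/andP.
  by rewrite eqr subrr mul0r.
- rewrite /t /K in rKn' *; field; rewrite ?rn ?rKn' //; by apply/andP.
- by field; rewrite ?rn.
- by field; rewrite ?rn.
- by field; rewrite ?rn.
Qed.
End T.

Section T. Variable R : realType.

Lemma cw_bound n (A : 'M[R]_n) (x : 'rV[R]_n) r a :
  (forall i j, 0 <= A i j) -> (forall i, 0 < x 0 i) -> x *m A = r *: x ->
  eigenvalue A a -> a <= r.
Proof.
move=> A0 xp xe /eigenvalueP [v va vn0].
have [j0 hj0] : exists j, v 0 j != 0.
  apply/existsP; apply: contraNT vn0 => /existsPn h.
  by apply/eqP/rowP => j; rewrite mxE; apply/eqP; move: (h j); rewrite negbK.
pose F j := `|v 0 j| / x 0 j.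
case: (@arg_maxP _ R _ j0 xpredT F isT) => j1 _ hmax.
set c := F j1.
have Fj0 : 0 < F j0 by rewrite /F divr_gt0 // normr_gt0.
have c0 : 0 < c.
  have h : F j0 <= c := hmax j0 isT. lra.
have hv i : `|v 0 i| <= c * x 0 i.
  have h : F i <= c := hmax i isT.
  have := h; rewrite -(ler_pM2r (xp i)) /F divfK ?gt_eqF //.
have vc : `|v 0 j1| = c * x 0 j1 by rewrite /c /F divfK // gt_eqF.
have e1 : \sum_i v 0 i * A i j1 = a * v 0 j1.
  by have := congr1 (fun M : 'rV[R]_n => M 0 j1) va; rewrite !mxE.
have e2 : \sum_i x 0 i * A i j1 = r * x 0 j1.
  by have := congr1 (fun M : 'rV[R]_n => M 0 j1) xe; rewrite !mxE.
have h1 : `|a| * `|v 0 j1| <= c * (r * x 0 j1).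
  rewrite -normrM -e1 -e2 mulr_sumr.
  apply: le_trans (ler_norm_sum _ _ _) _.
  apply: ler_sum => i _; rewrite normrM (ger0_norm (A0 i j1)) mulrA.
  by apply: ler_wpM2r => //; exact: hv.
have xj1 : 0 < x 0 j1 := xp j1.
have : `|a| <= r.
  rewrite vc in h1.
  have h2 : `|a| * (c * x 0 j1) <= r * (c * x 0 j1) by rewrite [X in _ <= X]mulrCA.
  by rewrite -(ler_pM2r (mulr_gt0 c0 xj1)).
by apply: le_trans; rewrite ler_norm.
Qed.

Lemma cmp_lt n (A : 'M[R]_n) (x y : 'rV[R]_n) r s j0 :
  (forall i j, A i j = A j i) -> (forall i, 0 < x 0 i) -> x *m A = r *: x ->
  (forall j, 0 <= y 0 j) -> (forall j, s * y 0 j <= (y *m A) 0 j) ->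
  s * y 0 j0 < (y *m A) 0 j0 -> s < r.
Proof.
move=> As xp xe y0 hle hlt.
have key : \sum_j (y *m A) 0 j * x 0 j = r * \sum_j y 0 j * x 0 j.
  under eq_bigr do rewrite mxE mulr_suml.
  rewrite exchange_big mulr_sumr; apply: eq_bigr => i _.
  have := congr1 (fun M : 'rV[R]_n => M 0 i) xe; rewrite !mxE => exi.
  rewrite mulrCA -exi mulr_sumr; apply: eq_bigr => j _.
  by rewrite (As j i); ring.
have strict : s * \sum_j y 0 j * x 0 j < \sum_j (y *m A) 0 j * x 0 j.
  rewrite mulr_sumr (bigD1 j0) //= [X in _ < X](bigD1 j0) //=.
  apply: ltr_leD.
    by rewrite mulrA ltr_pM2r.
  apply: ler_sum => j _; rewrite mulrA ler_wpM2r //; exact: ltW.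
have S0 : 0 <= \sum_j y 0 j * x 0 j by apply: sumr_ge0 => j _; rewrite mulr_ge0 // ltW.
rewrite key in strict.
rewrite ltNge; apply/negP => rs.
have : r * \sum_j y 0 j * x 0 j <= s * \sum_j y 0 j * x 0 j by rewrite ler_wpM2r.
lra.
Qed.
End T.

Section T. Variable R : realType.

Definition w_def (p x y : R) := (x `^ p + y `^ p) `^ p^-1.
Fact w_key : unit. Proof. by []. Qed.
Definition w := locked_with w_key w_def.
Lemma wE (p x y : R) : w p x y = (x `^ p + y `^ p) `^ p^-1.
Proof. by rewrite /w unlock. Qed.

Lemma wC (p x y : R) : w p x y = w p y x.
Proof. by rewrite !wE addrC. Qed.

Lemma powRK {p x : R} : 0 < p -> 0 <= x -> (x `^ p) `^ p^-1 = x.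
Proof. by move=> p0 x0; rewrite -powRrM mulfV ?gt_eqF // powRr1. Qed.

Lemma w_mono {p x y x' y' : R} : 0 < p -> 0 <= x -> x <= x' -> 0 <= y -> y <= y' ->
  w p x y <= w p x' y'.
Proof.
move=> p0 x0 xx y0 yy; rewrite !wE.
apply: ge0_ler_powR; rewrite ?nnegrE ?invr_ge0 ?addr_ge0 ?powR_ge0 ?(ltW p0) //.
apply: lerD; apply: ge0_ler_powR; rewrite ?nnegrE ?(ltW p0) //; lra.
Qed.

Lemma w_ge {p x y : R} : 0 < p -> 0 <= x -> 0 <= y -> x <= w p x y.
Proof.
move=> p0 x0 y0; rewrite !wE -{1}(powRK p0 x0).
apply: ge0_ler_powR; rewrite ?nnegrE ?invr_ge0 ?addr_ge0 ?powR_ge0 ?(ltW p0) //.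
by rewrite lerDl powR_ge0.
Qed.

Lemma w_gt0 {p x y : R} : 0 < p -> 0 < x -> 0 <= y -> 0 < w p x y.
Proof. move=> p0 x0 y0; have := w_ge p0 (ltW x0) y0; lra. Qed.

Lemma w22 (p : R) : 2 <= p -> w p 2 2 <= 3.
Proof.
move=> p2; have p0 : 0 < p by lra.
have e : (2 `^ p + 2 `^ p : R) = 2 * 2 `^ p by ring.
rewrite !wE e powRM ?powR_ge0 //; try lra.
rewrite powRK //; try lra.
have h : 2 `^ p^-1 <= 2 `^ 2^-1 :> R.
  apply: ler_powR; first lra.
  by rewrite lef_pV2 ?posrE //; lra.
rewrite powR12_sqrt in h; last by lra.
have s2 : Num.sqrt 2 ^+ 2 = 2 :> R by rewrite sqr_sqrtr //; lra.
have s0 : 0 <= Num.sqrt 2 :> R by rewrite sqrtr_ge0.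
nra.
Qed.

Lemma w32 (p : R) : 2 <= p -> (w p 3 2) ^+ 2 <= 13.
Proof.
move=> p2; have p0 : 0 < p by lra.
have e2 : 2 `^ p = (2/3) `^ p * 3 `^ p :> R.
  by rewrite -powRM; [congr (_ `^ _); field | lra | lra].
have h1 : (2/3) `^ p <= (2/3 : R) ^+ 2.
  rewrite -powR_mulrn; last by lra.
  by apply: ger_powR => //; apply/andP; split; lra.
have h3 : 0 <= 3 `^ p :> R by rewrite powR_ge0.
have h4 : 3 `^ p + 2 `^ p <= 13/9 * 3 `^ p :> R by rewrite e2; nra.
have h5 : w p 3 2 <= (13/9 * 3 `^ p) `^ p^-1.
  rewrite wE; apply: ge0_ler_powR; rewrite ?nnegrE ?invr_ge0 ?addr_ge0 ?powR_ge0 ?(ltW p0) //.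
rewrite powRM in h5; [| lra | exact: h3].
rewrite powRK in h5; [| lra | lra].
have h6 : (13/9 : R) `^ p^-1 <= (13/9) `^ 2^-1.
  apply: ler_powR; first lra.
  by rewrite lef_pV2 ?posrE //; lra.
rewrite powR12_sqrt in h6; last by lra.
have s2 : Num.sqrt (13/9) ^+ 2 = 13/9 :> R by rewrite sqr_sqrtr //; lra.
have s0 : 0 <= Num.sqrt (13/9) :> R by rewrite sqrtr_ge0.
have w0 : 0 <= w p 3 2 by rewrite !wE powR_ge0.
have h7 : w p 3 2 <= 3 * Num.sqrt (13/9) by nra.
nra.
Qed.
End T.


Definition E5 (i j : nat) := U5_nat i j || U5_nat j i.
Definition E4 n (i j : nat) := U4_nat n i j || U4_nat n j i.

Lemma E5C i j : E5 i j = E5 j i. Proof. by rewrite /E5 orbC. Qed.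
Lemma E4C n i j : E4 n i j = E4 n j i. Proof. by rewrite /E4 orbC. Qed.

Lemma sum5 (V : nmodType) n (F : nat -> V) (j : nat) : (7 <= n)%N ->
  \sum_(i < n) (if E5 i j then F i else 0) =
  (if E5 0%N j then F 0%N else 0) + (if E5 1%N j then F 1%N else 0) + (if E5 2%N j then F 2%N else 0)
  + (if E5 3%N j then F 3%N else 0) + (if (j == 3)%N then \sum_(4 <= i < n) F i else 0).
Proof.
move=> hn.
rewrite -(big_mkord xpredT (fun i => if E5 i j then F i else 0)).
rewrite big_ltn; last lia. rewrite big_ltn; last lia.
rewrite big_ltn; last lia. rewrite big_ltn; last lia.
rewrite !addrA; congr (_ + _).
case: eqP => [->|hj].
  apply: eq_big_nat => i hi; rewrite (_ : E5 i 3 = true) //; rewrite /E5 /U5_nat; lia.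
rewrite big_nat_cond big1 // => i /andP [hi _].
by rewrite (_ : E5 i j = false) //; rewrite /E5 /U5_nat; lia.
Qed.

Lemma sum4 (V : nmodType) n (F : nat -> V) (j : nat) : (7 <= n)%N ->
  \sum_(i < n) (if E4 n i j then F i else 0) =
  (if E4 n 0%N j then F 0%N else 0) + (if E4 n 1%N j then F 1%N else 0) + (if E4 n 2%N j then F 2%N else 0)
  + (if (j == 0)%N then \sum_(3 <= i < (n - 2)%N) F i else 0)
  + (if (j == 1)%N then F (n - 2)%N + F (n - 2)%N.+1 else 0).
Proof.
move=> hn.
rewrite -(big_mkord xpredT (fun i => if E4 n i j then F i else 0)).
rewrite big_ltn; last lia. rewrite big_ltn; last lia.
rewrite big_ltn; last lia.
rewrite (@big_cat_nat _ _ _ (n - 2)); [|lia|lia].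
have tail : \sum_((n - 2)%N <= i < n) (if E4 n i j then F i else 0) =
  (if E4 n (n - 2)%N j then F (n - 2)%N else 0) + (if E4 n (n - 2)%N.+1 j then F (n - 2)%N.+1 else 0).
  rewrite big_ltn; last lia. rewrite big_ltn; last lia. rewrite big_geq; last lia.
  by rewrite addr0.
have mid : \sum_(3 <= i < (n - 2)%N) (if E4 n i j then F i else 0) =
   (if (j == 0)%N then \sum_(3 <= i < (n - 2)%N) F i else 0).
  case: eqP => [->|hj].
    apply: eq_big_nat => i hi; rewrite (_ : E4 n i 0 = true) //; rewrite /E4 /U4_nat; lia.
  rewrite big_nat_cond big1 // => i /andP [hi _].
  by rewrite (_ : E4 n i j = false) //; rewrite /E4 /U4_nat; lia.
have tl : (if E4 n (n - 2)%N j then F (n - 2)%N else 0) + (if E4 n (n - 2)%N.+1 j then F (n - 2)%N.+1 else 0)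
   = (if (j == 1)%N then F (n - 2)%N + F (n - 2)%N.+1 else 0).
  case: eqP => [->|hj].
    rewrite (_ : E4 n (n - 2) 1 = true); last by rewrite /E4 /U4_nat; lia.
    by rewrite (_ : E4 n (n - 2).+1 1 = true); last by rewrite /E4 /U4_nat; lia.
  rewrite (_ : E4 n (n - 2) j = false); last by rewrite /E4 /U4_nat; lia.
  rewrite (_ : E4 n (n - 2).+1 j = false); last by rewrite /E4 /U4_nat; lia.
  by rewrite addr0.
by rewrite tail mid -tl !addrA.
Qed.

Section T. Variable R : realType.

Definition deg5 n (k : nat) : nat :=
  if k == 0%N then 3%N else if k == 1%N then 2%N else if k == 2%N then 2%N
  else if k == 3%N then (n - 3)%N else 1%N.

Lemma card_sum n (e : rel 'I_n) (i : 'I_n) :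
  (degree e i)%:R = \sum_(j < n) (if e i j then 1 else 0) :> R.
Proof.
by rewrite /degree -sumr_const big_mkcond; apply: eq_bigr => j _; rewrite inE.
Qed.

Lemma deg5E n (i : 'I_n) : (7 <= n)%N -> (degree (@U5 n) i)%:R = (deg5 n i)%:R :> R.
Proof.
move=> hn; rewrite card_sum.
transitivity (\sum_(j < n) (if E5 j i then (1:R) else 0)).
  by apply: eq_bigr => j _; rewrite E5C.
rewrite (@sum5 _ n (fun=> (1:R)) i) // sumr_const_nat.
case: i => [[|[|[|[|i]]]] hi]; rewrite /E5 /U5_nat /deg5 /= ?add0r ?addr0 //.
- lra.
- have h4 : (4 <= n)%N by lia. 
  have h3 : (3 <= n)%N by lia.
  rewrite !natrB //. ring.
Qed.

Definition V5 (X0 X1 X3 X4 : R) (k : nat) : R :=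
  if k == 0%N then X0 else if (k == 1%N) || (k == 2%N) then X1
  else if k == 3%N then X3 else X4.

Lemma V5_ge4 (X0 X1 X3 X4 : R) k : (4 <= k)%N -> V5 X0 X1 X3 X4 k = X4.
Proof. by case: k => [|[|[|[|k]]]]. Qed.

Lemma deg5_ge4 n k : (4 <= k)%N -> deg5 n k = 1%N.
Proof. by case: k => [|[|[|[|k]]]]. Qed.

Lemma A5E n (p : R) (i j : 'I_n) : (7 <= n)%N ->
  psombor_mx p (@U5 n) i j = if E5 i j then w p (deg5 n i)%:R (deg5 n j)%:R else 0.
Proof. by move=> hn; rewrite mxE !deg5E // /U5 /E5; case: ifP => // _; symmetry; apply: wE. Qed.

Lemma col5 n (p : R) (V : nat -> R) (j : 'I_n) : (7 <= n)%N ->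
  ((\row_(k < n) V k) *m psombor_mx p (@U5 n)) 0 j =
  \sum_(k < n) (if E5 k j then V k * w p (deg5 n k)%:R (deg5 n j)%:R else 0).
Proof.
move=> hn; rewrite mxE; apply: eq_bigr => k _; rewrite mxE A5E //.
by case: ifP => _; rewrite ?mulr0.
Qed.

Lemma U5_eig n (p r X1 X3 X4 : R) : (7 <= n)%N ->
  2 * w p 3 2 * X1 + w p 3 (n-3)%:R * X3 = r ->
  w p 3 2 + w p 2 2 * X1 = r * X1 ->
  w p 3 (n-3)%:R + (n-4)%:R * w p (n-3)%:R 1 * X4 = r * X3 ->
  w p (n-3)%:R 1 * X3 = r * X4 ->
  (\row_(k < n) V5 1 X1 X3 X4 k) *m psombor_mx p (@U5 n) =
  r *: (\row_(k < n) V5 1 X1 X3 X4 k).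
Proof.
move=> hn e0 e1 e3 e4; apply/rowP => j.
rewrite col5 // [RHS]mxE [X in _ = _ * X]mxE.
rewrite (@sum5 _ n (fun k => V5 1 X1 X3 X4 k * w p (deg5 n k)%:R (deg5 n j)%:R) j) //.
have tailE : \sum_(4 <= k < n) V5 1 X1 X3 X4 k * w p (deg5 n k)%:R (deg5 n j)%:R =
    (n - 4)%:R * (X4 * w p 1 (deg5 n j)%:R).
  rewrite mulr_natl -(@sumr_const_nat _ n 4 (X4 * w p 1 (deg5 n j)%:R)); apply: eq_big_nat => k /andP [hk _].
  by rewrite (V5_ge4 _ _ _ _ hk) (deg5_ge4 n hk).
rewrite tailE; clear tailE.
case: j => [[|[|[|[|j]]]] hj]; rewrite /E5 /U5_nat /deg5 /V5 /=.
- by rewrite (wC p 2 3) (wC p (n - 3)%:R 3) -e0; ring.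
- by rewrite -e1; ring.
- by rewrite -e1; ring.
- by rewrite -e3 (wC p 1 (n - 3)%:R); ring.
- by rewrite -e4; ring.
Qed.
End T.


Ltac decb :=
  repeat match goal with
  | |- context [E4 ?n ?a ?b] =>
      first [ rewrite (_ : E4 n a b = true); [|by rewrite /E4 /U4_nat; lia]
            | rewrite (_ : E4 n a b = false); [|by rewrite /E4 /U4_nat; lia] ]
  | |- context [(?a == ?b)%N] =>
      first [ rewrite (_ : (a == b)%N = true); [|by apply/eqP; lia]
            | rewrite (_ : (a == b)%N = false); [|by apply/negbTE/eqP; lia] ]
  | |- context [(?a <= ?b)%N] =>
      first [ rewrite (_ : (a <= b)%N = true); [|by apply/idP; lia]
            | rewrite (_ : (a <= b)%N = false); [|by apply/negbTE/negP; lia] ]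
  end.

Section T. Variable R : realType.

Definition deg4 n (k : nat) : nat :=
  if k == 0%N then (n - 3)%N else if k == 1%N then 4%N else if k == 2%N then 2%N else 1%N.

Lemma deg4_p n k : (3 <= k)%N -> deg4 n k = 1%N.
Proof. by move=> hk; rewrite /deg4; decb. Qed.

Lemma deg4E n (i : 'I_n) : (7 <= n)%N -> (degree (@U4 n) i)%:R = (deg4 n i)%:R :> R.
Proof.
move=> hn; rewrite card_sum.
transitivity (\sum_(j < n) (if E4 n j i then (1:R) else 0)).
  by apply: eq_bigr => j _; rewrite E4C.
rewrite (@sum4 _ n (fun=> (1:R)) i) // sumr_const_nat.
have hi := ltn_ord i.
have [i0|i0] := eqVneq (nat_of_ord i) 0%N.
  rewrite i0 /deg4; decb; rewrite /=.
  have h5 : (5 <= n)%N by lia. have h3 : (3 <= n)%N by lia.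
  rewrite (_ : (n - 2 - 3)%N = ((n - 3) - 2)%N); last lia.
  rewrite natrB; last lia. lra.
have [i1|i1] := eqVneq (nat_of_ord i) 1%N.
  rewrite i1 /deg4; decb; rewrite /=. lra.
have [i2|i2] := eqVneq (nat_of_ord i) 2%N.
  rewrite i2 /deg4; decb; rewrite /=. lra.
rewrite deg4_p; last by lia.
have [ip|ip] := ltnP i (n - 2); decb; lra.
Qed.

Definition V4 n (Y0 Y1 Y2 Yp Yq : R) (k : nat) : R :=
  if k == 0%N then Y0 else if k == 1%N then Y1 else if k == 2%N then Y2
  else if (k < n - 2)%N then Yp else Yq.

Lemma A4E n (p : R) (i j : 'I_n) : (7 <= n)%N ->
  psombor_mx p (@U4 n) i j = if E4 n i j then w p (deg4 n i)%:R (deg4 n j)%:R else 0.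
Proof. by move=> hn; rewrite mxE !deg4E // /U4 /E4; case: ifP => // _; symmetry; apply: wE. Qed.

Lemma col4 n (p : R) (V : nat -> R) (j : 'I_n) : (7 <= n)%N ->
  ((\row_(k < n) V k) *m psombor_mx p (@U4 n)) 0 j =
  \sum_(k < n) (if E4 n k j then V k * w p (deg4 n k)%:R (deg4 n j)%:R else 0).
Proof.
move=> hn; rewrite mxE; apply: eq_bigr => k _; rewrite mxE A4E //.
by case: ifP => _; rewrite ?mulr0.
Qed.

Lemma U4_col n (p Y0 Y1 Y2 Yp Yq : R) (j : 'I_n) : (7 <= n)%N ->
  ((\row_(k < n) V4 n Y0 Y1 Y2 Yp Yq k) *m psombor_mx p (@U4 n)) 0 j =
  if (nat_of_ord j == 0)%N then
    Y1 * w p 4 (n - 3)%:R + Y2 * w p 2 (n - 3)%:R + (n - 5)%:R * (Yp * w p 1 (n - 3)%:R)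
  else if (nat_of_ord j == 1)%N then
    Y0 * w p (n - 3)%:R 4 + Y2 * w p 2 4 + 2 * (Yq * w p 1 4)
  else if (nat_of_ord j == 2)%N then Y0 * w p (n - 3)%:R 2 + Y1 * w p 4 2
  else if (nat_of_ord j < n - 2)%N then Y0 * w p (n - 3)%:R 1
  else Y1 * w p 4 1.
Proof.
move=> hn; rewrite col4 //.
rewrite (@sum4 _ n (fun k => V4 n Y0 Y1 Y2 Yp Yq k * w p (deg4 n k)%:R (deg4 n j)%:R) j) //.
have midE : \sum_(3 <= k < (n - 2)%N) V4 n Y0 Y1 Y2 Yp Yq k * w p (deg4 n k)%:R (deg4 n j)%:R =
    (n - 5)%:R * (Yp * w p 1 (deg4 n j)%:R).
  rewrite mulr_natl (_ : (n - 5 = (n - 2) - 3)%N); last lia.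
  rewrite -(@sumr_const_nat _ (n - 2) 3 (Yp * w p 1 (deg4 n j)%:R)); apply: eq_big_nat => k hk.
  rewrite (deg4_p n (_ : (3 <= k)%N)); last lia.
  by rewrite /V4; decb.
have tailE : V4 n Y0 Y1 Y2 Yp Yq (n - 2)%N * w p (deg4 n (n - 2)%N)%:R (deg4 n j)%:R +
    V4 n Y0 Y1 Y2 Yp Yq (n - 2)%N.+1 * w p (deg4 n (n - 2)%N.+1)%:R (deg4 n j)%:R =
    2 * (Yq * w p 1 (deg4 n j)%:R).
  rewrite (deg4_p n (_ : (3 <= n - 2)%N)); last lia.
  rewrite (deg4_p n (_ : (3 <= (n - 2).+1)%N)); last lia.
  rewrite /V4; decb; ring.
rewrite midE tailE; clear midE tailE.
have hj := ltn_ord j.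
have [j0|j0] := eqVneq (nat_of_ord j) 0%N.
  rewrite j0 /deg4 /V4; decb; rewrite /=; ring.
have [j1|j1] := eqVneq (nat_of_ord j) 1%N.
  rewrite j1 /deg4 /V4; decb; rewrite /=; ring.
have [j2|j2] := eqVneq (nat_of_ord j) 2%N.
  rewrite j2 /deg4 /V4; decb; rewrite /=; ring.
rewrite (deg4_p n (_ : (3 <= j)%N)); last lia.
have [jp|jp] := ltnP j (n - 2); rewrite /deg4 /V4; decb; rewrite /=; ring.
Qed.

Lemma U4_forall n (p Y0 Y1 Y2 Yp Yq : R) (Q : R -> R -> Prop) : (7 <= n)%N ->
  Q Y0 (Y1 * w p 4 (n - 3)%:R + Y2 * w p 2 (n - 3)%:R + (n - 5)%:R * (Yp * w p 1 (n - 3)%:R)) ->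
  Q Y1 (Y0 * w p (n - 3)%:R 4 + Y2 * w p 2 4 + 2 * (Yq * w p 1 4)) ->
  Q Y2 (Y0 * w p (n - 3)%:R 2 + Y1 * w p 4 2) ->
  Q Yp (Y0 * w p (n - 3)%:R 1) ->
  Q Yq (Y1 * w p 4 1) ->
  forall j : 'I_n, Q (V4 n Y0 Y1 Y2 Yp Yq j)
    (((\row_(k < n) V4 n Y0 Y1 Y2 Yp Yq k) *m psombor_mx p (@U4 n)) 0 j).
Proof.
move=> hn H0 H1 H2 Hp Hq j; rewrite U4_col //.
have hj := ltn_ord j.
have [j0|j0] := eqVneq (nat_of_ord j) 0%N.
  by rewrite j0 /V4 /=.
have [j1|j1] := eqVneq (nat_of_ord j) 1%N.
  by rewrite j1 /V4 /=.
have [j2|j2] := eqVneq (nat_of_ord j) 2%N.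
  by rewrite j2 /V4 /=.
by have [jp|jp] := ltnP j (n - 2); rewrite /V4; decb.
Qed.
End T.

Section T. Variable R : realType.

Lemma ineq1 (a c e f g h X1 X3 q r : R) : 8 <= r -> g <= 3 -> 0 < X3 -> h <= a ->
  4 <= c -> 4 <= e -> f ^+ 2 <= 13 -> 0 < f -> X1 * (r - g) = f -> c / r <= q ->
  2 * f * X1 + h * X3 <= X3 * a + q * c + 2 * (e / r * e).
Proof.
move=> r8 g3 X30 ha c4 e4 f13 f0 hX1 hq.
have r0 : 0 < r by lra.
have rg : 0 < r - g by lra.
set K := c ^+ 2 + 2 * e ^+ 2.
have K48 : 48 <= K by rewrite /K; nra.
have h1 : (2 * f * X1 * r) * (r - g) = 2 * f ^+ 2 * r.
  by rewrite -hX1; ring.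
have h2 : 2 * f ^+ 2 * r <= K * (r - g) by nra.
have h3 : 2 * f * X1 * r <= K.
  by rewrite -(ler_pM2r rg) h1.
set t := r^-1.
have t0 : 0 < t by rewrite /t invr_gt0.
have rt : r * t = 1 by rewrite /t mulfV // gt_eqF.
have h4 : 2 * f * X1 <= K * t.
  have : 2 * f * X1 * r * t <= K * t by rewrite ler_pM2r.
  by rewrite -mulrA rt mulr1.
have h5 : c * t <= q by rewrite /t -[c / r]/(c * r^-1) in hq.
have h6 : c * (c * t) <= q * c by rewrite mulrC ler_pM2r //; lra.
have h7 : h * X3 <= X3 * a by rewrite mulrC ler_pM2l.
have -> : 2 * (e / r * e) = 2 * e ^+ 2 * t by rewrite /t; ring.
rewrite /K in h4. nra.
Qed.
End T.


Unset Implicit Arguments.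
Theorem lemma4p1 (R : realType) (n : nat) (p : R) (hn : (7 <= n)%N) (hp : 2 <= p) :
  exists r5 r4 : R,
    [/\ is_largest_eigenvalue (psombor_mx p (@U5 n)) r5,
        is_largest_eigenvalue (psombor_mx p (@U4 n)) r4 & r5 < r4].
Proof.
have p0 : 0 < p by lra.
have m4 : (4 : R) <= (n - 3)%:R by rewrite ler_nat; lia.
have m0 : (0 : R) < (n - 3)%:R by lra.
have N3 : (3 : R) <= (n - 4)%:R by rewrite ler_nat; lia.
have NM : ((n - 4)%:R : R) = (n - 5)%:R + 1.
  by rewrite (_ : (n - 4 = (n - 5).+1)%N) ?natr1 //; lia.
have M0 : (0 : R) <= (n - 5)%:R by apply: ler0n.
have f0 : 0 < w p 3 2 by apply: w_gt0 => //; lra.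
have g0 : 0 < w p 2 2 by apply: w_gt0 => //; lra.
have h0 : 0 < w p 3 (n - 3)%:R by apply: w_gt0 => //; lra.
have d0 : 0 < w p (n - 3)%:R 1 by apply: w_gt0 => //; lra.
have a0 : 0 < w p (n - 3)%:R 4 by apply: w_gt0 => //; lra.
have b0 : 0 < w p (n - 3)%:R 2 by apply: w_gt0 => //; lra.
have c0 : 0 < w p 4 2 by apply: w_gt0 => //; lra.
have e0 : 0 < w p 4 1 by apply: w_gt0 => //; lra.
have g3 : w p 2 2 <= 3 := w22 hp.
have f13 : w p 3 2 ^+ 2 <= 13 := w32 hp.
have hm : (n - 3)%:R <= w p 3 (n - 3)%:R by rewrite wC; apply: w_ge => //; lra.
have dm : (n - 3)%:R <= w p (n - 3)%:R 1 by apply: w_ge => //; lra.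
have c4 : 4 <= w p 4 2 by apply: w_ge => //; lra.
have e4 : 4 <= w p 4 1 by apply: w_ge => //; lra.
have ha : w p 3 (n - 3)%:R <= w p (n - 3)%:R 4.
  by rewrite (wC p (n - 3)%:R 4); apply: w_mono => //; lra.
have bd : w p (n - 3)%:R 1 <= w p (n - 3)%:R 2 by apply: w_mono => //; lra.
have gh : w p 2 2 < w p 3 (n - 3)%:R by lra.
have N0 : (0 : R) <= (n - 4)%:R by lra.
have [r5 [X1 [X3 [X4 [[r5b r50 X10 X30 X40] [q50 q51 q53 q54]]]]]] :=
  U5_root f0 g0 h0 d0 N0 gh.
have [r4 [T1 [T2 [Yp [Yq [[r40 T10 T20 Yp0 Yq0] [q40 q41 q42 q43 q44]]]]]]] :=
  U4_root a0 b0 c0 d0 e0 M0.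
have i0lt : (0 < n)%N := leq_trans (isT : (0 < 7)%N) hn.
pose i0 : 'I_n := Ordinal i0lt.
have eig5 := U5_eig hn q50 q51 q53 q54.
set x5 := \row_(k < n) V5 1 X1 X3 X4 k in eig5.
have x5p : forall i, 0 < x5 0 i.
  move=> i; rewrite mxE /V5; case: ifP => _; first lra.
  case: ifP => _ //; case: ifP => _ //.
have A5nn : forall i j, 0 <= psombor_mx p (@U5 n) i j.
  by move=> i j; rewrite mxE; case: ifP => _; [apply: powR_ge0 | exact: lexx].
have x5n0 : x5 != 0.
  by apply/eqP => hx; have := x5p i0; rewrite hx mxE ltxx.
have L5 : is_largest_eigenvalue (psombor_mx p (@U5 n)) r5.
  split; first by apply/eigenvalueP; exists x5.
  by move=> z hz; apply: cw_bound A5nn x5p eig5 hz.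
set x4 := \row_(k < n) V4 n 1 T1 T2 Yp Yq k.
have eig4 : x4 *m psombor_mx p (@U4 n) = r4 *: x4.
  apply/rowP => j; rewrite [RHS]mxE [X in _ = _ * X]mxE; move: j.
  apply: (U4_forall (Q := fun v s => s = r4 * v)) => //; cbv beta.
  - by rewrite (wC p 4 (n - 3)%:R) (wC p 2 (n - 3)%:R) (wC p 1 (n - 3)%:R) -q40; ring.
  - by rewrite (wC p 2 4) (wC p 1 4) -q41; ring.
  - by rewrite -q42; ring.
  - by rewrite -q43; ring.
  - by rewrite -q44; ring.
have x4p : forall i, 0 < x4 0 i.
  move=> i; rewrite mxE /V4; case: ifP => _; first lra.
  case: ifP => _ //; case: ifP => _ //; case: ifP => _ //.
have A4nn : forall i j, 0 <= psombor_mx p (@U4 n) i j.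
  by move=> i j; rewrite mxE; case: ifP => _; [apply: powR_ge0 | exact: lexx].
have x4n0 : x4 != 0.
  by apply/eqP => hx; have := x4p i0; rewrite hx mxE ltxx.
have L4 : is_largest_eigenvalue (psombor_mx p (@U4 n)) r4.
  split; first by apply/eigenvalueP; exists x4.
  by move=> z hz; apply: cw_bound A4nn x4p eig4 hz.
have A4sym : forall i j, psombor_mx p (@U4 n) i j = psombor_mx p (@U4 n) j i.
  by move=> i j; rewrite !A4E // E4C wC.
have r58 : 8 <= r5.
  have : 64 <= r5 ^+ 2 by nra.
  nra.
have r5n : r5 != 0 by rewrite gt_eqF.
set q := (w p (n - 3)%:R 2 * X3 + w p 4 2) / r5.
have qr : r5 * q = w p (n - 3)%:R 2 * X3 + w p 4 2 by rewrite /q mulrC divfK.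
have q0 : 0 < q by rewrite /q divr_gt0 //; nra.
have strict0 : r5 * X3 < 1 * w p 4 (n - 3)%:R + q * w p 2 (n - 3)%:R +
    (n - 5)%:R * (X4 * w p 1 (n - 3)%:R).
  rewrite (wC p 4 (n - 3)%:R) (wC p 2 (n - 3)%:R) (wC p 1 (n - 3)%:R).
  have k1 : r5 * (w p (n - 3)%:R 1 * X4) = w p (n - 3)%:R 1 * (w p (n - 3)%:R 1 * X3).
    by rewrite q54; ring.
  have k2 : w p (n - 3)%:R 1 * (w p (n - 3)%:R 1 * X3) <
            w p (n - 3)%:R 2 * (w p (n - 3)%:R 2 * X3 + w p 4 2).
    have kb : 0 < w p (n - 3)%:R 2 * w p 4 2 by rewrite mulr_gt0.
    have kk : w p (n - 3)%:R 1 * w p (n - 3)%:R 1 <= w p (n - 3)%:R 2 * w p (n - 3)%:R 2.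
      by apply: ler_pM => //; apply: ltW.
    have kk2 : w p (n - 3)%:R 1 * w p (n - 3)%:R 1 * X3 <= w p (n - 3)%:R 2 * w p (n - 3)%:R 2 * X3.
      by rewrite ler_pM2r.
    nra.
  have k3 : w p (n - 3)%:R 1 * X4 < q * w p (n - 3)%:R 2.
    rewrite -(ltr_pM2l r50) k1 (mulrA r5 q) qr; nra.
  rewrite -q53 NM.
  nra.
set y := \row_(k < n) V4 n X3 1 q X4 (w p 4 1 / r5) k.
have yp : forall j, 0 <= y 0 j.
  move=> j; rewrite mxE /V4; case: ifP => _; first lra.
  case: ifP => _; first lra.
  case: ifP => _; first lra.
  case: ifP => _; first lra.
  by rewrite divr_ge0 // ltW.
have hle : forall j, r5 * y 0 j <= (y *m psombor_mx p (@U4 n)) 0 j.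
  move=> j; rewrite [y 0 j]mxE; move: j.
  apply: (U4_forall (Q := fun v s => r5 * v <= s)) => //; cbv beta.
  - exact: ltW.
  - rewrite mulr1 -{1}q50 (wC p 2 4) (wC p 1 4).
    apply: (ineq1 (g := w p 2 2)) => //.
    + by rewrite mulrBr (mulrC X1 r5) -q51; ring.
    + rewrite /q ler_pM2r ?invr_gt0 //; nra.
  - by rewrite qr; lra.
  - by rewrite -q54; lra.
  - by rewrite mulrC divfK // mul1r.
have hlt : r5 * y 0 i0 < (y *m psombor_mx p (@U4 n)) 0 i0.
  by rewrite [y 0 i0]mxE U4_col //=.
have r54 : r5 < r4 := cmp_lt A4sym x4p eig4 yp hle hlt.
by exists r5, r4.
Qed.
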